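(* If an infinite word $w$ is abelian-square rich and linearly recurrent, then it is uniformly abelian-square rich.
   Context: For a word $u$ over $\Sigma=\{a_1,\dots,a_\sigma\}$, its Parikh vector is $P(u)=(|u|_{a_1},\dots,|u|_{a_\sigma})$, where $|u|_a$ counts occurrences of $a$. An abelian square is a word $v_1v_2$ with $P(v_1)=P(v_2)$. The factor complexity $p_w(n)$ is the number of distinct factors of $w$ of length $n$. The recurrence index $R_w(n)$ is the least $m$ such that every factor of $w$ of length $m$ contains all factors of $w$ of length $n$; $w$ is linearly recurrent if $R_w(n)$ is defined for all $n$ and $R_w(n)/n$ is bounded. An infinite word $w$ is abelian-square rich if there is a constant $C>0$ such that for all sufficiently large $n$, $\frac{1}{p_w(n)}\sum_{v}(\text{number of distinct abelian square factors of } v)\geq Cn^2$, the sum over factors $v$ of $w$ of length $n$. It is uniformly abelian-square rich if there is a constant $C>0$ such that for all sufficiently large $n$, every factor $v$ of $w$ of length $n$ has at least $Cn^2$ distinct abelian square factors (i.e., the infimum over such $v$ is $\geq Cn^2$). *)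

(* Defs.v *)
From HB Require Import structures.
From mathcomp Require Import all_boot all_order all_algebra.
From mathcomp Require Import boolp reals.
Set Implicit Arguments. Unset Strict Implicit. Unset Printing Implicit Defensive.
Import Order.TTheory GRing.Theory Num.Theory.

Definition infword (A : finType) := nat -> A.

Section Words.
Variable A : finType.

Definition parikh (u : seq A) : {ffun A -> nat} := [ffun a => count_mem a u].

(* u is an abelian square: u = v1 v2 with P(v1) = P(v2).  Necessarily
   |v1| = |v2| = |u|/2; we count only nonempty abelian squares. *)
Definition abelian_square (u : seq A) : bool :=
  [&& 0 < size u, ~~ odd (size u) &
      parikh (take (size u)./2 u) == parikh (drop (size u)./2 u)].

Definition factors_of (v : seq A) : seq (seq A) :=
  [seq take l (drop i v) | i <- iota 0 (size v), l <- iota 1 (size v - i)].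

Definition nb_asq (v : seq A) : nat :=
  size (undup (filter abelian_square (factors_of v))).

Definition factor_at (w : infword A) (i n : nat) : n.-tuple A :=
  [tuple w (i + j) | j < n].

Definition factors (w : infword A) (n : nat) : {set n.-tuple A} :=
  [set t | `[< exists i, t = factor_at w i n >]].

Definition complexity (w : infword A) (n : nat) : nat := #|factors w n|.

(* Every factor of w of length m contains every factor of w of length n. *)
Definition recurrent_within (w : infword A) (n m : nat) : Prop :=
  forall i k : nat, exists j : nat,
    [/\ i <= j, j + n <= i + m & forall l, l < n -> w (j + l) = w (k + l)].

Definition is_recurrence_index (w : infword A) (n m : nat) : Prop :=
  recurrent_within w n m /\ forall m', recurrent_within w n m' -> m <= m'.

Definition linearly_recurrent (w : infword A) : Prop :=
  (forall n, exists m, is_recurrence_index w n m) /\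
  exists K : nat, forall n m, 0 < n -> is_recurrence_index w n m -> m <= K * n.

Local Open Scope ring_scope.

Definition abelian_square_rich (R : realType) (w : infword A) : Prop :=
  exists C : R, 0 < C /\ exists N : nat, forall n : nat, (N <= n)%N ->
    C * (n%:R) ^+ 2 <=
      (complexity w n)%:R^-1 * (\sum_(t in factors w n) (nb_asq t)%:R).

Definition uniformly_abelian_square_rich (R : realType) (w : infword A) : Prop :=
  exists C : R, 0 < C /\ exists N : nat, forall n : nat, (N <= n)%N ->
    forall i : nat, C * (n%:R) ^+ 2 <= (nb_asq (factor_at w i n))%:R.

End Words.

(* Main.v *)
Require Import Defs.
From mathcomp Require Import all_boot all_order all_algebra.
From mathcomp Require Import boolp reals.
Set Implicit Arguments. Unset Strict Implicit. Unset Printing Implicit Defensive.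
From mathcomp Require Import zify ring.
Import Order.TTheory GRing.Theory Num.Theory.

Lemma mem_factors_of (A : finType) (v x : seq A) :
  x \in factors_of v <-> exists i l, [/\ i < size v, 0 < l, l <= size v - i & x = take l (drop i v)].
Proof.
split.
  move/allpairsPdep => [i [l [Hi Hl ->]]].
  rewrite mem_iota in Hi; rewrite mem_iota in Hl.
  exists i, l; split => //; lia.
move=> [i [l [Hi Hl1 Hl2 ->]]]; apply/allpairsPdep; exists i, l; split => //.
  by rewrite mem_iota.
rewrite mem_iota; lia.
Qed.

Lemma nb_asq_sub (A : finType) (s : seq A) d n :
  d + n <= size s -> nb_asq (take n (drop d s)) <= nb_asq s.
Proof.
move=> Hs; rewrite /nb_asq; apply: uniq_leq_size; first exact: undup_uniq.
move=> x; rewrite !mem_undup !mem_filter => /andP[-> /mem_factors_of [i [l [Hi Hl1 Hl2 ->]]]] /=.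
have Hsz : size (take n (drop d s)) = n by rewrite size_takel // size_drop; lia.
rewrite Hsz in Hi Hl2.
apply/mem_factors_of; exists (d + i), l; split; [lia|lia|lia|].
have -> : n = (n - i) + i by lia.
rewrite -take_drop take_takel; last lia.
by rewrite drop_drop addnC.
Qed.

Lemma nth_factor_at (A : finType) (w : infword A) x0 i n p :
  p < n -> nth x0 (factor_at w i n) p = w (i + p).
Proof. move=> Hp. exact: (nth_mktuple _ x0 (Ordinal Hp)). Qed.

Lemma factor_at_sub (A : finType) (w : infword A) i j n m :
  i <= j -> j + n <= i + m ->
  val (factor_at w j n) = take n (drop (j - i) (factor_at w i m)).
Proof.
move=> Hij Hjn.
apply: (@eq_from_nth _ (w 0)).
  by rewrite size_tuple size_takel // size_drop size_tuple; lia.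
move=> p; rewrite size_tuple => Hp.
rewrite nth_take // nth_drop !nth_factor_at //; first by congr w; lia.
lia.
Qed.

Local Open Scope ring_scope.
Lemma step1 (R : realType) (A : finType) (w : infword A) (C : R) n :
  C * (n%:R) ^+ 2 <=
      (complexity w n)%:R^-1 * (\sum_(t in factors w n) (nb_asq t)%:R) ->
  exists k, C * (n%:R) ^+ 2 <= (nb_asq (factor_at w k n))%:R.
Proof.
move=> H.
have Hin : factor_at w 0 n \in factors w n by rewrite inE; apply/asboolP; exists 0%N.
have Hc : (0 < #|factors w n|)%N by apply/card_gt0P; exists (factor_at w 0 n).
have [t0 Ht0 HM] := eq_bigmax_cond (fun t : n.-tuple A => nb_asq t) Hc.
move: Ht0; rewrite inE => /asboolP [k Hk]; exists k.
apply: (le_trans H); rewrite -Hk -HM.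
have Hs : \sum_(t in factors w n) (nb_asq t)%:R <=
   \sum_(t in factors w n) ((\max_(t in factors w n) nb_asq t)%N)%:R :> R.
  apply: ler_sum => t Ht; rewrite ler_nat; exact: (leq_bigmax_cond t Ht).
rewrite sumr_const in Hs.
have Hc0 : 0 < (complexity w n)%:R :> R by rewrite ltr0n.
by rewrite ler_pdivrMl // mulr_natl.
Qed.

Theorem lemma2 (R : realType) (A : finType) (w : infword A) :
  abelian_square_rich R w -> linearly_recurrent w ->
  uniformly_abelian_square_rich R w.
Proof.
move=> [C [C0 [N HN]]] [Hex [K HK]].
set K1 := K.+1.
exists (C / (4 * K1 ^ 2)%N%:R); split.
  by apply: divr_gt0 => //; rewrite ltr0n; lia.
exists (N.+1 * K1)%N => m Hm i.
set n := (m %/ K1)%N.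
have HnK : (n * K1 <= m)%N by apply: leq_trunc_div.
have HnK2 : (m < (n.+1) * K1)%N by rewrite /n; rewrite ltn_ceil.
have Hn0 : (N < n)%N.
  have := leq_ltn_trans Hm HnK2; by rewrite ltn_pmul2r.
have [k Hk] := step1 (HN n (ltnW Hn0)).
have [mr Hmr] := Hex n.
have Hmr2 := HK n mr (leq_ltn_trans (leq0n N) Hn0) Hmr.
have [j [Hij Hjn Heq]] := (proj1 Hmr) i k.
have Hfe : factor_at w j n = factor_at w k n.
  apply: val_inj; apply: (@eq_from_nth _ (w 0)); first by rewrite !size_tuple.
  move=> p; rewrite size_tuple => Hp; rewrite !nth_factor_at //; exact: Heq.
have Hle : (nb_asq (factor_at w k n) <= nb_asq (factor_at w i m))%N.
  rewrite -Hfe (@factor_at_sub _ w i j n m Hij); last lia.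
  apply: nb_asq_sub; rewrite size_tuple; lia.
apply: (le_trans _ (le_trans Hk _)); last by rewrite ler_nat.
have Hm2 : (m <= 2 * K1 * n)%N by nia.
have HmR : (m%:R : R) ^+ 2 <= ((2 * K1 * n)%N%:R) ^+ 2.
  by rewrite lerXn2r ?nnegrE ?ler0n ?ler_nat.
have Hpos : 0 < C / (4 * K1 ^ 2)%N%:R by apply: divr_gt0 => //; rewrite ltr0n; lia.
apply: (le_trans (ler_wpM2l (ltW Hpos) HmR)).
rewrite !natrM ?natrX !exprMn.
have HK0 : (K1%:R : R) != 0 by rewrite pnatr_eq0.
rewrite le_eqVlt; apply/orP; left; apply/eqP.
field. by rewrite HK0.
Qed.
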